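(* Let $(M^n)_{n\in\mathbb{N}}$ be a sequence of nonnegative matrices in $\mathbb{R}^{p\times q}_+$ converging (entrywise) to $M\in\mathbb{R}^{p\times q}_+$, and suppose $\operatorname{rank}_{\mathrm{psd}}(M^n)\le k$ for all $n$. Then $\operatorname{rank}_{\mathrm{psd}}(M)\le k$.
   Context: $\mathcal{S}^k_+$ denotes the cone of $k\times k$ real symmetric positive semidefinite matrices, with inner product $\langle A,B\rangle = \operatorname{trace}(AB)$. A psd factorization of size $k$ of a nonnegative matrix $M\in\mathbb{R}^{p\times q}_+$ is a collection $A_1,\dots,A_p, B_1,\dots,B_q \in \mathcal{S}^k_+$ with $M_{ij} = \langle A_i, B_j\rangle$ for all $i,j$; the psd rank $\operatorname{rank}_{\mathrm{psd}}(M)$ is the smallest $k$ for which such a factorization exists. *)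

(* Defs.v *)
From Stdlib Require Import Reals.
Open Scope R_scope.

Fixpoint sumR (n : nat) (f : nat -> R) : R :=
  match n with
  | O => 0
  | S m => sumR m f + f m
  end.

(* A (real) matrix is a function of row/column indices; only the indices
   below the relevant dimensions matter. *)
Definition Mat := nat -> nat -> R.

Definition is_psd (k : nat) (A : Mat) : Prop :=
  (forall i j, (i < k)%nat -> (j < k)%nat -> A i j = A j i) /\
  (forall x : nat -> R,
      0 <= sumR k (fun i => sumR k (fun j => x i * A i j * x j))).

Definition tr_inner (k : nat) (A B : Mat) : R :=
  sumR k (fun i => sumR k (fun j => A i j * B j i)).

Definition nonneg_mat (p q : nat) (M : Mat) : Prop :=
  forall i j, (i < p)%nat -> (j < q)%nat -> 0 <= M i j.

Definition has_psd_factorization (p q k : nat) (M : Mat) : Prop :=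
  exists (A B : nat -> Mat),
    (forall i, (i < p)%nat -> is_psd k (A i)) /\
    (forall j, (j < q)%nat -> is_psd k (B j)) /\
    (forall i j, (i < p)%nat -> (j < q)%nat -> M i j = tr_inner k (A i) (B j)).

Definition is_psd_rank (p q : nat) (M : Mat) (r : nat) : Prop :=
  has_psd_factorization p q r M /\
  (forall k, has_psd_factorization p q k M -> (r <= k)%nat).

(* Main.v *)
Require Import Defs.
From Stdlib Require Import Reals Lra Lia FunctionalExtensionality IndefiniteDescription ClassicalEpsilon Classical List Wf_nat.
Open Scope R_scope.

Lemma sumR_ext n f g : (forall i, (i < n)%nat -> f i = g i) -> sumR n f = sumR n g.
Proof. induction n; simpl; intros H; auto. rewrite IHn by (intros; apply H; lia). rewrite H by lia. auto. Qed.

Lemma sumR_plus n f g : sumR n (fun i => f i + g i) = sumR n f + sumR n g.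
Proof. induction n; simpl; [lra|]. rewrite IHn; lra. Qed.

Lemma sumR_opp n f : sumR n (fun i => - f i) = - sumR n f.
Proof. induction n; simpl; [lra|]. rewrite IHn; lra. Qed.

Lemma sumR_scal_l n c f : sumR n (fun i => c * f i) = c * sumR n f.
Proof. induction n; simpl; [lra|]. rewrite IHn; lra. Qed.

Lemma sumR_scal_r n c f : sumR n (fun i => f i * c) = sumR n f * c.
Proof. induction n; simpl; [lra|]. rewrite IHn; lra. Qed.

Lemma sumR_0 n : sumR n (fun _ => 0) = 0.
Proof. induction n; simpl; [lra|]. rewrite IHn; lra. Qed.

Lemma sumR_swap n m (f : nat -> nat -> R) :
  sumR n (fun i => sumR m (fun j => f i j)) = sumR m (fun j => sumR n (fun i => f i j)).
Proof.
  induction n; simpl.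
  - rewrite sumR_0; auto.
  - rewrite IHn, <- sumR_plus. auto.
Qed.

Lemma sumR_nonneg n f : (forall i, (i < n)%nat -> 0 <= f i) -> 0 <= sumR n f.
Proof. induction n; simpl; intros H; [lra|]. assert (0 <= f n) by (apply H; lia).
  assert (0 <= sumR n f) by (apply IHn; intros; apply H; lia). lra. Qed.

Lemma sumR_le n f g : (forall i, (i < n)%nat -> f i <= g i) -> sumR n f <= sumR n g.
Proof. induction n; simpl; intros H; [lra|]. assert (f n <= g n) by (apply H; lia).
  assert (sumR n f <= sumR n g) by (apply IHn; intros; apply H; lia). lra. Qed.

Lemma sumR_single_le n f a : (forall i, (i < n)%nat -> 0 <= f i) -> (a < n)%nat -> f a <= sumR n f.
Proof. induction n; simpl; intros H Ha; [lia|].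
  assert (0 <= f n) by (apply H; lia).
  assert (0 <= sumR n f) by (apply sumR_nonneg; intros; apply H; lia).
  destruct (Nat.eq_dec a n). subst; lra.
  assert (f a <= sumR n f) by (apply IHn; [intros; apply H; lia| lia]). lra. Qed.

Lemma sumR_trunc r k f : (r <= k)%nat -> (forall i, (r <= i)%nat -> (i < k)%nat -> f i = 0) ->
  sumR k f = sumR r f.
Proof. induction k; intros Hr H. replace r with 0%nat by lia; auto.
  destruct (Nat.eq_dec r (S k)). subst; auto.
  simpl. rewrite IHk by (try lia; intros; apply H; lia). rewrite H by lia. lra. Qed.

Definition dl (i j : nat) : R := if Nat.eqb i j then 1 else 0.

Lemma dl_same i : dl i i = 1. Proof. unfold dl; rewrite Nat.eqb_refl; auto. Qed.
Lemma dl_diff i j : i <> j -> dl i j = 0.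
Proof. intros; unfold dl; destruct (Nat.eqb_spec i j); auto; lia. Qed.
Lemma dl_sym i j : dl i j = dl j i.
Proof. unfold dl; rewrite Nat.eqb_sym; auto. Qed.

Lemma sumR_dl n a f : (a < n)%nat -> sumR n (fun x => dl x a * f x) = f a.
Proof. induction n; intros Ha; [lia|]. simpl.
  destruct (Nat.eq_dec a n).
  - subst. rewrite dl_same. rewrite (sumR_ext _ _ (fun _ => 0)). rewrite sumR_0; lra.
    intros; rewrite dl_diff by lia; lra.
  - rewrite IHn by lia. rewrite dl_diff by lia. lra. Qed.

Lemma sumR_dl' n a f : (a < n)%nat -> sumR n (fun x => dl a x * f x) = f a.
Proof. intros; rewrite <- (sumR_dl n a f) by auto. apply sumR_ext; intros; rewrite dl_sym; auto. Qed.
Definition mm (k : nat) (A B : Mat) : Mat := fun i j => sumR k (fun l => A i l * B l j).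
Definition tp (A : Mat) : Mat := fun i j => A j i.
Definition cong (k : nat) (T A : Mat) : Mat := mm k (mm k (tp T) A) T.
Definition vm (x : nat -> R) : Mat := fun i j => x i.
Definition mv (k : nat) (T : Mat) (x : nat -> R) : nat -> R := fun a => sumR k (fun b => T a b * x b).
Definition qf (k : nat) (A : Mat) (x : nat -> R) : R := sumR k (fun i => sumR k (fun j => x i * A i j * x j)).

Lemma mm_assoc k A B C : mm k (mm k A B) C = mm k A (mm k B C).
Proof.
  apply functional_extensionality; intro i; apply functional_extensionality; intro j.
  unfold mm. transitivity (sumR k (fun l => sumR k (fun m => A i m * B m l * C l j))).
  - apply sumR_ext; intros. rewrite <- sumR_scal_r. auto.
  - rewrite sumR_swap. apply sumR_ext; intros. rewrite <- sumR_scal_l. apply sumR_ext; intros. ring.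
Qed.

Lemma tr_mm k A B : tr_inner k A B = sumR k (fun i => mm k A B i i).
Proof. reflexivity. Qed.

Lemma tr_comm k A B : tr_inner k A B = tr_inner k B A.
Proof. unfold tr_inner. rewrite sumR_swap. apply sumR_ext; intros; apply sumR_ext; intros; ring. Qed.

Lemma tr_ext k A A' B B' : (forall i j, (i < k)%nat -> (j < k)%nat -> A i j = A' i j) ->
  (forall i j, (i < k)%nat -> (j < k)%nat -> B i j = B' i j) -> tr_inner k A B = tr_inner k A' B'.
Proof. intros HA HB. unfold tr_inner. apply sumR_ext; intros; apply sumR_ext; intros.
  rewrite HA, HB; auto. Qed.

Lemma qf_mm k A x : qf k A x = mm k (mm k (tp (vm x)) A) (vm x) 0%nat 0%nat.
Proof. unfold qf, mm, tp, vm. rewrite sumR_swap. apply sumR_ext; intros.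
  rewrite <- sumR_scal_r. apply sumR_ext; intros; ring. Qed.

Lemma qf_cong k T A x : qf k (cong k T A) x = qf k A (mv k T x).
Proof.
  rewrite !qf_mm. unfold cong.
  assert (E1 : mm k (tp (vm x)) (tp T) = tp (vm (mv k T x))).
  { apply functional_extensionality; intro i; apply functional_extensionality; intro j.
    unfold mm, tp, vm, mv. apply sumR_ext; intros; ring. }
  assert (E2 : mm k T (vm x) = vm (mv k T x)).
  { apply functional_extensionality; intro i; apply functional_extensionality; intro j.
    unfold mm, vm, mv. auto. }
  rewrite <- E1, <- E2, !mm_assoc. reflexivity.
Qed.

Lemma psd_cong k T A : is_psd k A -> is_psd k (cong k T A).
Proof.
  intros [Hs Hq]. split.
  - intros i j Hi Hj. unfold cong, mm, tp.
    transitivity (sumR k (fun l => sumR k (fun m => T m i * A m l * T l j))).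
    + apply sumR_ext; intros. rewrite <- sumR_scal_r. auto.
    + rewrite sumR_swap. apply sumR_ext; intros. rewrite <- sumR_scal_r. apply sumR_ext; intros.
      rewrite Hs by auto. ring.
  - intros x. fold (qf k (cong k T A) x). rewrite qf_cong. apply Hq.
Qed.

Lemma mm_ext_r k B X Y i j : (forall l j, (l < k)%nat -> (j < k)%nat -> X l j = Y l j) ->
  (j < k)%nat -> mm k B X i j = mm k B Y i j.
Proof. intros H Hj; unfold mm; apply sumR_ext; intros; rewrite H; auto. Qed.

Lemma tr_cong k T S A B : (forall a b, (a < k)%nat -> (b < k)%nat -> mm k T S a b = dl a b) ->
  tr_inner k (cong k T A) (cong k (tp S) B) = tr_inner k A B.
Proof.
  intros HTS. unfold cong.
  assert (tpt : tp (tp S) = S) by reflexivity. rewrite tpt.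
  assert (Hid : forall X i j, (i < k)%nat -> mm k (mm k T S) X i j = X i j).
  { intros X i j Hi. unfold mm at 1. rewrite <- (sumR_dl' k i (fun l => X l j)) by auto.
    apply sumR_ext; intros. rewrite HTS by auto. auto. }
  assert (Hid' : forall X i j, (j < k)%nat -> mm k X (mm k (tp S) (tp T)) i j = X i j).
  { intros X i j Hj. unfold mm at 1. rewrite <- (sumR_dl k j (fun l => X i l)) by auto.
    apply sumR_ext; intros.
    assert (E : mm k (tp S) (tp T) i0 j = dl i0 j).
    { rewrite dl_sym, <- HTS by auto. unfold mm, tp. apply sumR_ext; intros; ring. }
    rewrite E; ring.
  }
  rewrite tr_mm, mm_assoc.
  rewrite <- tr_mm, tr_comm, tr_mm.
  rewrite (mm_assoc k S B (tp S)).
  rewrite <- (mm_assoc k T S).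
  transitivity (sumR k (fun i => mm k (mm k B (tp S)) (mm k (tp T) A) i i)).
  { apply sumR_ext; intros. unfold mm at 1 3. apply sumR_ext; intros. rewrite Hid by auto. auto. }
  rewrite mm_assoc, <- (mm_assoc k (tp S)).
  transitivity (sumR k (fun i => mm k B A i i)).
  { apply sumR_ext; intros. apply mm_ext_r; auto. intros l j Hl Hj.
    unfold mm at 1. rewrite <- (sumR_dl' k l (fun m => A m j)) by auto.
    apply sumR_ext; intros m Hm. f_equal. rewrite dl_sym, <- HTS by auto.
    unfold mm, tp. apply sumR_ext; intros; ring. }
  rewrite <- tr_mm, tr_comm. auto.
Qed.

Lemma qf_one k A a : (a < k)%nat -> qf k A (fun i => dl i a) = A a a.
Proof.
  intros Ha. unfold qf.
  transitivity (sumR k (fun i => dl i a * A i a)).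
  { apply sumR_ext; intros. rewrite <- (sumR_dl k a (fun j => dl i a * A i j)) by auto.
    apply sumR_ext; intros; ring. }
  rewrite (sumR_dl k a (fun i => A i a)); auto.
Qed.

Lemma qf_two k A a b s t : (a < k)%nat -> (b < k)%nat -> a <> b ->
  qf k A (fun i => s * dl i a + t * dl i b) =
  s * s * A a a + s * t * (A a b + A b a) + t * t * A b b.
Proof.
  intros Ha Hb Hab. unfold qf.
  transitivity (sumR k (fun i => (s * dl i a + t * dl i b) * (s * A i a + t * A i b))).
  { apply sumR_ext; intros.
    transitivity (sumR k (fun j => dl j a * ((s * dl i a + t * dl i b) * A i j * s)
                                + dl j b * ((s * dl i a + t * dl i b) * A i j * t))).
    { apply sumR_ext; intros; ring. }
    rewrite (sumR_plus k (fun j => dl j a * ((s * dl i a + t * dl i b) * A i j * s))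
       (fun j => dl j b * ((s * dl i a + t * dl i b) * A i j * t))).
    rewrite (sumR_dl k a (fun j => ((s * dl i a + t * dl i b) * A i j * s))) by auto.
    rewrite (sumR_dl k b (fun j => ((s * dl i a + t * dl i b) * A i j * t))) by auto. ring. }
  transitivity (sumR k (fun i => dl i a * (s * (s * A i a + t * A i b)) + dl i b * (t * (s * A i a + t * A i b)))).
  { apply sumR_ext; intros; ring. }
  rewrite (sumR_plus k (fun i => dl i a * (s * (s * A i a + t * A i b))) (fun i => dl i b * (t * (s * A i a + t * A i b)))).
  rewrite (sumR_dl k a (fun i => (s * (s * A i a + t * A i b)))) by auto.
  rewrite (sumR_dl k b (fun i => (t * (s * A i a + t * A i b)))) by auto. ring.
Qed.

Lemma psd_diag k A a : is_psd k A -> (a < k)%nat -> 0 <= A a a.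
Proof. intros [_ Hq] Ha. rewrite <- (qf_one k A a) by auto. apply Hq. Qed.

Lemma psd_off k A a b : is_psd k A -> (a < k)%nat -> (b < k)%nat ->
  2 * Rabs (A a b) <= A a a + A b b.
Proof.
  intros HA Ha Hb. destruct (Nat.eq_dec a b).
  - subst. pose proof (psd_diag k A b HA Hb). rewrite Rabs_right; lra.
  - destruct HA as [Hs Hq] eqn:E.
    pose proof (qf_two k A a b 1 1 Ha Hb n). pose proof (qf_two k A a b 1 (-1) Ha Hb n).
    pose proof (Hq (fun i => 1 * dl i a + 1 * dl i b)).
    pose proof (Hq (fun i => 1 * dl i a + -1 * dl i b)).
    unfold qf in *. rewrite (Hs b a) in * by auto.
    unfold Rabs; destruct (Rcase_abs (A a b)); lra.
Qed.

Lemma psd_row0 k A a b : is_psd k A -> (a < k)%nat -> (b < k)%nat -> A a a = 0 -> A a b = 0.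
Proof.
  intros HA Ha Hb H0. destruct (Nat.eq_dec a b). subst; auto.
  destruct HA as [Hs Hq].
  destruct (Req_dec (A a b) 0) as [|Hne]; auto. exfalso.
  set (t := - (A b b + 1) / (2 * A a b)).
  pose proof (qf_two k A a b t 1 Ha Hb n). pose proof (Hq (fun i => t * dl i a + 1 * dl i b)).
  unfold qf in *. rewrite H in H1. rewrite (Hs b a) in H1 by auto. rewrite H0 in H1.
  assert (E : t * 1 * (A a b + A a b) = - (A b b + 1)). { unfold t. field. auto. }
  lra.
Qed.

Definition fact (p q k : nat) (M : Mat) (A B : nat -> Mat) : Prop :=
  (forall i, (i < p)%nat -> is_psd k (A i)) /\
  (forall j, (j < q)%nat -> is_psd k (B j)) /\
  (forall i j, (i < p)%nat -> (j < q)%nat -> M i j = tr_inner k (A i) (B j)).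

Definition Wsum (p : nat) (A : nat -> Mat) : Mat := fun a b => sumR p (fun i => A i a b).

Lemma fact_cong p q k M A B T S : fact p q k M A B ->
  (forall a b, (a < k)%nat -> (b < k)%nat -> mm k T S a b = dl a b) ->
  fact p q k M (fun i => cong k T (A i)) (fun j => cong k (tp S) (B j)).
Proof.
  intros [HA [HB HM]] HTS. split; [|split].
  - intros; apply psd_cong; auto.
  - intros; apply psd_cong; auto.
  - intros. rewrite tr_cong by auto. auto.
Qed.

Lemma cong_expand k T X a b : cong k T X a b = sumR k (fun x => sumR k (fun y => T x a * X x y * T y b)).
Proof. unfold cong, mm, tp. rewrite sumR_swap. apply sumR_ext; intros.
  rewrite <- sumR_scal_r. auto. Qed.

Lemma Wsum_cong p k T A : Wsum p (fun i => cong k T (A i)) = cong k T (Wsum p A).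
Proof.
  apply functional_extensionality; intro a; apply functional_extensionality; intro b.
  unfold Wsum. rewrite cong_expand.
  transitivity (sumR p (fun i => sumR k (fun x => sumR k (fun y => T x a * A i x y * T y b)))).
  { apply sumR_ext; intros; apply cong_expand. }
  rewrite sumR_swap. apply sumR_ext; intros. rewrite sumR_swap. apply sumR_ext; intros.
  rewrite <- sumR_scal_l, <- sumR_scal_r. apply sumR_ext; intros; ring.
Qed.

Lemma qf_Wsum p k A x : qf k (Wsum p A) x = sumR p (fun i => qf k (A i) x).
Proof.
  unfold qf, Wsum. symmetry. rewrite sumR_swap. apply sumR_ext; intros. rewrite sumR_swap.
  apply sumR_ext; intros. rewrite <- sumR_scal_l, <- sumR_scal_r. apply sumR_ext; intros; ring.
Qed.

Lemma psd_Wsum p k A : (forall i, (i < p)%nat -> is_psd k (A i)) -> is_psd k (Wsum p A).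
Proof.
  intros H. split.
  - intros a b Ha Hb. unfold Wsum. apply sumR_ext; intros. destruct (H i); auto.
  - intros x. fold (qf k (Wsum p A) x). rewrite qf_Wsum. apply sumR_nonneg; intros.
    destruct (H i); auto. apply H2.
Qed.

Definition diagm (d : nat -> R) : Mat := fun a b => dl a b * d b.

Lemma mm_diagm k d e a b : (a < k)%nat -> mm k (diagm d) (diagm e) a b = dl a b * (d b * e b).
Proof. intros Ha. unfold mm, diagm.
  transitivity (sumR k (fun l => dl a l * (d l * (dl l b * e b)))).
  { apply sumR_ext; intros; ring. }
  rewrite (sumR_dl' k a (fun l => d l * (dl l b * e b))) by auto.
  destruct (Nat.eq_dec a b). subst. rewrite dl_same. ring.
  rewrite dl_diff by auto. ring.
Qed.

Lemma cong_diagm k d X a b : (a < k)%nat -> (b < k)%nat -> cong k (diagm d) X a b = d a * X a b * d b.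
Proof.
  intros Ha Hb. rewrite cong_expand. unfold diagm.
  transitivity (sumR k (fun x => dl x a * (d a * X x b * d b))).
  { apply sumR_ext; intros x Hx.
    transitivity (sumR k (fun y => dl y b * (dl x a * d a * X x y * d b))).
    { apply sumR_ext; intros; ring. }
    rewrite (sumR_dl k b (fun y => (dl x a * d a * X x y * d b))) by auto. ring. }
  rewrite (sumR_dl k a (fun x => (d a * X x b * d b))) by auto. auto.
Qed.

Definition Tel (m : nat) (u : nat -> R) : Mat := fun a b => dl a b + dl a m * u b.
Definition Sel (m : nat) (u : nat -> R) : Mat := fun a b => dl a b - dl a m * u b.

Lemma mm_el k m u a b : u m = 0 -> (a < k)%nat -> (b < k)%nat -> (m < k)%nat ->
  mm k (Tel m u) (Sel m u) a b = dl a b.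
Proof.
  intros Hu Ha Hb Hm. unfold mm, Tel, Sel.
  transitivity (sumR k (fun l => dl l b * (dl a l + dl a m * u l) + - (dl l m * ((dl a l + dl a m * u l) * u b)))).
  { apply sumR_ext; intros; ring. }
  rewrite sumR_plus, sumR_opp.
  rewrite (sumR_dl k b (fun l => (dl a l + dl a m * u l))) by auto.
  rewrite (sumR_dl k m (fun l => ((dl a l + dl a m * u l) * u b))) by auto.
  rewrite Hu. rewrite (dl_sym a b). ring.
Qed.

Lemma cong_el k m u X a b : (a < k)%nat -> (b < k)%nat -> (m < k)%nat ->
  cong k (Tel m u) X a b = X a b + u b * X a m + u a * X m b + u a * u b * X m m.
Proof.
  intros Ha Hb Hm. rewrite cong_expand. unfold Tel.
  transitivity (sumR k (fun x => (dl x a + dl x m * u a) * (X x b + X x m * u b))).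
  { apply sumR_ext; intros x Hx.
    transitivity (sumR k (fun y => dl y b * ((dl x a + dl x m * u a) * X x y) +
       dl y m * ((dl x a + dl x m * u a) * X x y * u b))).
    { apply sumR_ext; intros; ring. }
    rewrite sumR_plus.
    rewrite (sumR_dl k b (fun y => ((dl x a + dl x m * u a) * X x y))) by auto.
    rewrite (sumR_dl k m (fun y => ((dl x a + dl x m * u a) * X x y * u b))) by auto. ring. }
  transitivity (sumR k (fun x => dl x a * (X x b + X x m * u b) + dl x m * (u a * (X x b + X x m * u b)))).
  { apply sumR_ext; intros; ring. }
  rewrite sumR_plus.
  rewrite (sumR_dl k a (fun x => (X x b + X x m * u b))) by auto.
  rewrite (sumR_dl k m (fun x => u a * (X x b + X x m * u b))) by auto. ring.
Qed.

Definition Inv (k m : nat) (W : Mat) : Prop :=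
  (forall a b, (a < m)%nat -> (a < k)%nat -> (b < k)%nat -> a <> b -> W a b = 0) /\
  (forall a, (a < m)%nat -> (a < k)%nat -> W a a = 0 \/ W a a = 1).

Lemma proc_step p q k M A B m : (m < k)%nat -> fact p q k M A B -> Inv k m (Wsum p A) ->
  exists A' B', fact p q k M A' B' /\ Inv k (S m) (Wsum p A').
Proof.
  intros Hm Hf [HI1 HI2].
  set (W := Wsum p A) in *.
  assert (HW : is_psd k W) by (apply psd_Wsum; apply Hf).
  assert (Hsym : forall a b, (a < k)%nat -> (b < k)%nat -> W a b = W b a) by apply HW.
  destruct (Req_dec (W m m) 0) as [Hc0|Hc0].
  - exists A, B. split; auto. split.
    + intros a b Ha Hak Hb Hab. destruct (Nat.eq_dec a m).
      * subst. apply psd_row0 with k; auto.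
      * apply HI1; auto; lia.
    + intros a Ha Hak. destruct (Nat.eq_dec a m). subst; left; auto. apply HI2; lia.
  - set (c := W m m).
    assert (Hc : 0 < c) by (pose proof (psd_diag k W m HW Hm); unfold c in *; lra).
    set (u := fun b => if Nat.eqb b m then 0 else - W m b / c).
    assert (Hum : u m = 0) by (unfold u; rewrite Nat.eqb_refl; auto).
    assert (Hua : forall a, (a < m)%nat -> u a = 0).
    { intros a Ha. unfold u. destruct (Nat.eqb_spec a m). lia.
      rewrite Hsym by lia. rewrite HI1 by lia. field. lra. }
    set (A2 := fun i => cong k (Tel m u) (A i)).
    set (B2 := fun j => cong k (tp (Sel m u)) (B j)).
    assert (Hf2 : fact p q k M A2 B2).
    { apply fact_cong; auto. intros; apply mm_el; auto. }
    assert (HW2 : forall a b, (a < k)%nat -> (b < k)%nat ->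
       Wsum p A2 a b = W a b + u b * W a m + u a * W m b + u a * u b * W m m).
    { intros. unfold A2. rewrite Wsum_cong. apply cong_el; auto. }
    set (d := fun a => if Nat.eqb a m then / sqrt c else 1).
    set (e := fun a => if Nat.eqb a m then sqrt c else 1).
    assert (Hsc : 0 < sqrt c) by (apply sqrt_lt_R0; auto).
    assert (Hde : forall b, d b * e b = 1).
    { intros b. unfold d, e. destruct (Nat.eqb b m). field. lra. ring. }
    set (A3 := fun i => cong k (diagm d) (A2 i)).
    set (B3 := fun j => cong k (tp (diagm e)) (B2 j)).
    exists A3, B3. split.
    + apply fact_cong; auto. intros. rewrite mm_diagm by auto. rewrite Hde. ring.
    + assert (HW3 : forall a b, (a < k)%nat -> (b < k)%nat ->
        Wsum p A3 a b = d a * Wsum p A2 a b * d b).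
      { intros. unfold A3. rewrite Wsum_cong. apply cong_diagm; auto. }
      split.
      * intros a b Ha Hak Hb Hab. rewrite HW3, HW2 by auto.
        destruct (Nat.eq_dec a m).
        -- subst a. rewrite Hum. fold c. unfold u.
           destruct (Nat.eqb_spec b m). lia. field_simplify; [ring|lra].
        -- rewrite (Hua a) by lia. rewrite (HI1 a b) by lia. rewrite (HI1 a m) by lia. ring.
      * intros a Ha Hak. rewrite HW3, HW2 by auto. destruct (Nat.eq_dec a m).
        -- subst a. rewrite Hum. fold c. right. unfold d. rewrite Nat.eqb_refl.
           replace (/ sqrt c * (c + 0 * c + 0 * c + 0 * 0 * c) * / sqrt c) with (c / (sqrt c * sqrt c)) by (field; lra).
           rewrite sqrt_sqrt by lra. field. lra.
        -- rewrite (Hua a) by lia. unfold d. destruct (Nat.eqb_spec a m). lia.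
           destruct (HI2 a) as [H|H]; try lia; [left|right]; rewrite H; ring.
Qed.

Lemma proc p q k M A B m : (m <= k)%nat -> fact p q k M A B ->
  exists A' B', fact p q k M A' B' /\ Inv k m (Wsum p A').
Proof.
  induction m; intros Hm Hf.
  - exists A, B. split; auto. split; intros; lia.
  - destruct IHm as [A1 [B1 [Hf1 HI]]]; auto; try lia.
    apply proc_step with A1 B1; auto.
Qed.

Lemma tr_Wsum p k A Y : sumR p (fun i => tr_inner k (A i) Y) = tr_inner k (Wsum p A) Y.
Proof.
  unfold tr_inner, Wsum. rewrite sumR_swap. apply sumR_ext; intros.
  rewrite sumR_swap. apply sumR_ext; intros. rewrite sumR_scal_r. auto.
Qed.

Lemma normalize p q k M A B : fact p q k M A B ->
  exists A' B', fact p q k M A' B' /\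
    (forall i a b, (i < p)%nat -> (a < k)%nat -> (b < k)%nat -> Rabs (A' i a b) <= 1) /\
    (forall j a b, (j < q)%nat -> (a < k)%nat -> (b < k)%nat ->
        Rabs (B' j a b) <= sumR p (fun i => M i j)).
Proof.
  intros Hf. destruct (proc p q k M A B k (le_n k) Hf) as [A1 [B1 [[HA [HB HM]] [HI1 HI2]]]].
  set (W := Wsum p A1) in *.
  set (w := fun a => W a a).
  assert (HWd : forall a, (a < k)%nat -> W a a = 0 \/ W a a = 1) by (intros; apply HI2; auto).
  assert (HAd : forall i a, (i < p)%nat -> (a < k)%nat -> A1 i a a <= W a a).
  { intros. unfold W, Wsum. apply (sumR_single_le p (fun i => A1 i a a)); auto.
    intros; apply psd_diag with k; auto. }
  assert (HAw : forall i a b, (i < p)%nat -> (a < k)%nat -> (b < k)%nat -> w a * A1 i a b * w b = A1 i a b).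
  { intros i a b Hi Ha Hb. unfold w.
    assert (Z : forall c, (c < k)%nat -> W c c = 0 -> forall d, (d < k)%nat -> A1 i c d = 0 /\ A1 i d c = 0).
    { intros c Hc Hz d Hd. pose proof (HAd i c Hi Hc). pose proof (psd_diag k (A1 i) c (HA i Hi) Hc).
      assert (A1 i c c = 0) by lra. split. apply psd_row0 with k; auto.
      destruct (HA i Hi) as [Hs _]. rewrite Hs by auto. apply psd_row0 with k; auto. }
    destruct (HWd a Ha) as [Ea|Ea]; rewrite Ea.
    - destruct (Z a Ha Ea b Hb) as [-> _]. ring.
    - destruct (HWd b Hb) as [Eb|Eb]; rewrite Eb. destruct (Z b Hb Eb a Ha) as [_ ->]. ring. ring. }
  set (B' := fun j => cong k (diagm w) (B1 j)).
  assert (HB' : forall j, (j < q)%nat -> is_psd k (B' j)) by (intros; apply psd_cong; auto).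
  assert (HB'e : forall j a b, (a < k)%nat -> (b < k)%nat -> B' j a b = w a * B1 j a b * w b).
  { intros; unfold B'; apply cong_diagm; auto. }
  assert (HM' : forall i j, (i < p)%nat -> (j < q)%nat -> M i j = tr_inner k (A1 i) (B' j)).
  { intros i j Hi Hj. rewrite HM by auto. unfold tr_inner. apply sumR_ext; intros a Ha.
    apply sumR_ext; intros b Hb. rewrite HB'e by auto. rewrite <- (HAw i a b) at 1 by auto. ring. }
  exists A1, B'. split; [split; [|split]; auto|split].
  - intros i a b Hi Ha Hb. pose proof (psd_off k (A1 i) a b (HA i Hi) Ha Hb).
    pose proof (HAd i a Hi Ha). pose proof (HAd i b Hi Hb).
    destruct (HWd a Ha); destruct (HWd b Hb); lra.
  - intros j a b Hj Ha Hb.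
    assert (HS : sumR p (fun i => M i j) = sumR k (fun a => B' j a a)).
    { rewrite (sumR_ext p _ (fun i => tr_inner k (A1 i) (B' j))) by (intros; apply HM'; auto).
      rewrite tr_Wsum. fold W. unfold tr_inner. apply sumR_ext; intros c Hc.
      transitivity (sumR k (fun d => dl d c * (W c c * B' j d c))).
      { apply sumR_ext; intros d Hd. destruct (Nat.eq_dec c d).
        - subst. rewrite dl_same. ring.
        - rewrite dl_diff by auto. rewrite HI1 by auto. ring. }
      rewrite (sumR_dl k c (fun d => W c c * B' j d c)) by auto.
      rewrite HB'e by auto. unfold w. destruct (HWd c Hc) as [E|E]; rewrite E; ring. }
    assert (Hdg : forall c, (c < k)%nat -> B' j c c <= sumR p (fun i => M i j)).
    { intros c Hc. rewrite HS. apply (sumR_single_le k (fun a => B' j a a)); auto.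
      intros; apply psd_diag with k; auto. }
    pose proof (psd_off k (B' j) a b (HB' j Hj) Ha Hb).
    pose proof (Hdg a Ha). pose proof (Hdg b Hb). lra.
Qed.

Lemma sum2_trunc r k (F : nat -> nat -> R) : (r <= k)%nat ->
  (forall a b, (a < k)%nat -> (b < k)%nat -> (r <= a \/ r <= b)%nat -> F a b = 0) ->
  sumR k (fun a => sumR k (fun b => F a b)) = sumR r (fun a => sumR r (fun b => F a b)).
Proof.
  intros Hr H. rewrite (sumR_trunc r k).
  - apply sumR_ext; intros. apply sumR_trunc; auto. intros; apply H; lia.
  - auto.
  - intros. rewrite (sumR_ext _ _ (fun _ => 0)). apply sumR_0. intros; apply H; lia.
Qed.

Definition pad (r : nat) (X : Mat) : Mat := fun a b => if (Nat.ltb a r && Nat.ltb b r)%bool then X a b else 0.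

Lemma pad_in r X a b : (a < r)%nat -> (b < r)%nat -> pad r X a b = X a b.
Proof. intros; unfold pad. destruct (Nat.ltb_spec a r); destruct (Nat.ltb_spec b r); simpl; auto; lia. Qed.
Lemma pad_out r X a b : (r <= a \/ r <= b)%nat -> pad r X a b = 0.
Proof. intros; unfold pad. destruct (Nat.ltb_spec a r); destruct (Nat.ltb_spec b r); simpl; auto; lia. Qed.

Lemma psd_pad r k X : (r <= k)%nat -> is_psd r X -> is_psd k (pad r X).
Proof.
  intros Hr [Hs Hq]. split.
  - intros a b Ha Hb. destruct (Nat.lt_ge_cases a r); destruct (Nat.lt_ge_cases b r).
    + rewrite !pad_in by auto. auto.
    + rewrite !pad_out by lia. auto.
    + rewrite !pad_out by lia. auto.
    + rewrite !pad_out by lia. auto.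
  - intros x. rewrite (sum2_trunc r k (fun a b => x a * pad r X a b * x b)); auto.
    + rewrite (sumR_ext _ _ (fun a => sumR r (fun b => x a * X a b * x b))). apply Hq.
      intros; apply sumR_ext; intros; rewrite pad_in; auto.
    + intros; rewrite pad_out; auto; ring.
Qed.

Lemma tr_pad r k X Y : (r <= k)%nat -> tr_inner k (pad r X) (pad r Y) = tr_inner r X Y.
Proof.
  intros Hr. unfold tr_inner. rewrite (sum2_trunc r k (fun a b => pad r X a b * pad r Y b a)); auto.
  - apply sumR_ext; intros; apply sumR_ext; intros; rewrite !pad_in; auto.
  - intros; rewrite (pad_out r X); auto; ring.
Qed.

Lemma pad_fact p q r k M : (r <= k)%nat -> has_psd_factorization p q r M ->
  exists A B, fact p q k M A B.
Proof.
  intros Hr [A [B [HA [HB HM]]]]. exists (fun i => pad r (A i)), (fun j => pad r (B j)).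
  split; [|split].
  - intros; apply psd_pad; auto.
  - intros; apply psd_pad; auto.
  - intros; rewrite tr_pad; auto.
Qed.

Lemma cv_const c : Un_cv (fun _ => c) c.
Proof. intros eps He. exists 0%nat. intros. unfold Rdist. rewrite Rminus_diag, Rabs_R0. auto. Qed.

Lemma cv_ext u v l : (forall n, u n = v n) -> Un_cv u l -> Un_cv v l.
Proof. intros H Hu eps He. destruct (Hu eps He) as [N HN]. exists N. intros. rewrite <- H. auto. Qed.

Lemma cv_sumR n (f : nat -> nat -> R) (l : nat -> R) :
  (forall i, (i < n)%nat -> Un_cv (fun m => f m i) (l i)) ->
  Un_cv (fun m => sumR n (f m)) (sumR n l).
Proof.
  induction n; intros H; simpl.
  - apply cv_const.
  - apply CV_plus. apply IHn; intros; apply H; lia. apply H; lia.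
Qed.

Lemma cv_nonneg u l : Un_cv u l -> (forall n, 0 <= u n) -> 0 <= l.
Proof.
  intros Hu Hn. destruct (Rle_or_lt 0 l); auto.
  destruct (Hu (- l)) as [N HN]; [lra|]. specialize (HN N (le_n N)). specialize (Hn N).
  unfold Rdist in HN. rewrite Rabs_right in HN by lra. lra.
Qed.

Lemma cv_bounded u l : Un_cv u l -> exists C, forall n, Rabs (u n) <= C.
Proof.
  intros Hu. destruct (Hu 1) as [N HN]; [lra|].
  exists (Rabs l + 1 + sumR N (fun n => Rabs (u n))). intros n.
  assert (0 <= sumR N (fun n => Rabs (u n))) by (apply sumR_nonneg; intros; apply Rabs_pos).
  pose proof (Rabs_pos l).
  destruct (Nat.lt_ge_cases n N).
  - pose proof (sumR_single_le N (fun n => Rabs (u n)) n (fun i _ => Rabs_pos (u i)) H1). simpl in H2. lra.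
  - specialize (HN n H1). unfold Rdist in HN.
    pose proof (Rabs_triang_inv (u n) l). lra.
Qed.

Definition SM (phi : nat -> nat) : Prop := forall n m, (n < m)%nat -> (phi n < phi m)%nat.

Lemma SM_step phi : (forall n, (phi n < phi (S n))%nat) -> SM phi.
Proof. intros H n m Hnm. induction Hnm. apply H. specialize (H m). lia. Qed.

Lemma SM_ge phi : SM phi -> forall n, (n <= phi n)%nat.
Proof. intros H n. induction n. lia. specialize (H n (S n) (Nat.lt_succ_diag_r n)). lia. Qed.

Lemma SM_comp f g : SM f -> SM g -> SM (fun n => f (g n)).
Proof. intros Hf Hg n m H. apply Hf, Hg, H. Qed.

Lemma SM_id : SM (fun n => n).
Proof. intros n m H; auto. Qed.

Lemma cv_sub u l phi : Un_cv u l -> SM phi -> Un_cv (fun n => u (phi n)) l.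
Proof.
  intros Hu Hp eps He. destruct (Hu eps He) as [N HN]. exists N. intros n Hn.
  apply HN. pose proof (SM_ge phi Hp n). lia.
Qed.

Lemma BW1 u C : (forall n, Rabs (u n) <= C) -> exists phi l, SM phi /\ Un_cv (fun n => u (phi n)) l.
Proof.
  intros Hb.
  destruct (Bolzano_Weierstrass u (fun c => -C <= c <= C) (compact_P3 (-C) C)) as [l Hl].
  { intros n. specialize (Hb n). unfold Rabs in Hb. destruct (Rcase_abs (u n)); lra. }
  assert (H : forall N n, exists p, (N <= p)%nat /\ Rabs (u p - l) < / INR (S n)).
  { intros N n. assert (Hpos : 0 < / INR (S n)) by (apply Rinv_0_lt_compat, lt_0_INR; lia).
    destruct (Hl (disc l (mkposreal _ Hpos)) N) as [p [Hp1 Hp2]].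
    - exists (mkposreal _ Hpos). intros x Hx; auto.
    - exists p. split; auto. }
  set (g := fun N n => proj1_sig (constructive_indefinite_description _ (H N n))).
  assert (Hg : forall N n, (N <= g N n)%nat /\ Rabs (u (g N n) - l) < / INR (S n)).
  { intros. unfold g. destruct (constructive_indefinite_description _ (H N n)); auto. }
  set (phi := fix phi n := match n with O => g 0%nat 0%nat | S n' => g (S (phi n')) (S n') end).
  assert (Hphi : forall n, Rabs (u (phi n) - l) < / INR (S n)).
  { intros n; destruct n; simpl; apply Hg. }
  exists phi, l. split.
  - apply SM_step. intros n. simpl. destruct (Hg (S (phi n)) (S n)). lia.
  - intros eps He. destruct (archimed_cor1 eps He) as [N [HN HN0]]. exists N. intros n Hn.
    unfold Rdist. specialize (Hphi n).
    assert (/ INR (S n) <= / INR N).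
    { apply Rinv_le_contravar. apply lt_0_INR; lia. apply le_INR; lia. }
    lra.
Qed.

Lemma BWL {X : Type} (L : list X) (u : nat -> X -> R) :
  (forall x, In x L -> exists C, forall n, Rabs (u n x) <= C) ->
  exists phi (lim : X -> R), SM phi /\ forall x, In x L -> Un_cv (fun n => u (phi n) x) (lim x).
Proof.
  revert u. induction L as [|x0 L IH]; intros u Hb.
  - exists (fun n => n), (fun _ => 0). split. apply SM_id. intros x [].
  - destruct (IH u) as [phi [lim [Hphi Hlim]]]. { intros; apply Hb; right; auto. }
    destruct (Hb x0 (or_introl eq_refl)) as [C HC].
    destruct (BW1 (fun n => u (phi n) x0) C) as [psi [l0 [Hpsi Hl0]]]. { intros; apply HC. }
    exists (fun n => phi (psi n)).
    exists (fun x => match excluded_middle_informative (x = x0) with left _ => l0 | right _ => lim x end).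
    split. apply SM_comp; auto.
    intros x Hx. destruct (excluded_middle_informative (x = x0)).
    + subst. auto.
    + destruct Hx. congruence. apply (cv_sub (fun n => u (phi n) x)); auto.
Qed.

Theorem theorem2p9 (p q k : nat) (Ms : nat -> Mat) (M : Mat) :
  (forall n, nonneg_mat p q (Ms n)) ->
  nonneg_mat p q M ->
  (forall i j, (i < p)%nat -> (j < q)%nat ->
     Un_cv (fun n => Ms n i j) (M i j)) ->
  (forall n, exists r, is_psd_rank p q (Ms n) r /\ (r <= k)%nat) ->
  exists r, is_psd_rank p q M r /\ (r <= k)%nat.
Proof.
  intros _ _ Hcv Hrk.
  assert (HF : forall n, exists AB : (nat -> Mat) * (nat -> Mat),
    fact p q k (Ms n) (fst AB) (snd AB) /\
    (forall i a b, (i < p)%nat -> (a < k)%nat -> (b < k)%nat -> Rabs (fst AB i a b) <= 1) /\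
    (forall j a b, (j < q)%nat -> (a < k)%nat -> (b < k)%nat ->
        Rabs (snd AB j a b) <= sumR p (fun i => Ms n i j))).
  { intros n. destruct (Hrk n) as [r [[Hr _] Hrk']].
    destruct (pad_fact p q r k (Ms n) Hrk' Hr) as [A [B Hf]].
    destruct (normalize p q k (Ms n) A B Hf) as [A' [B' H]]. exists (A', B'). exact H. }
  set (F := fun n => proj1_sig (constructive_indefinite_description _ (HF n))).
  assert (HFn : forall n, fact p q k (Ms n) (fst (F n)) (snd (F n)) /\
    (forall i a b, (i < p)%nat -> (a < k)%nat -> (b < k)%nat -> Rabs (fst (F n) i a b) <= 1) /\
    (forall j a b, (j < q)%nat -> (a < k)%nat -> (b < k)%nat ->
        Rabs (snd (F n) j a b) <= sumR p (fun i => Ms n i j))).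
  { intros n. unfold F. destruct (constructive_indefinite_description _ (HF n)); auto. }
  set (u := fun n (x : bool * nat * nat * nat) => let '(t, i, a, b) := x in
            if t then fst (F n) i a b else snd (F n) i a b).
  set (L := list_prod (list_prod (list_prod (true :: nil) (seq 0 p)) (seq 0 k)) (seq 0 k) ++
            list_prod (list_prod (list_prod (false :: nil) (seq 0 q)) (seq 0 k)) (seq 0 k)).
  assert (HL : forall t i a b, In (t, i, a, b) L <->
     ((t = true /\ (i < p)%nat) \/ (t = false /\ (i < q)%nat)) /\ (a < k)%nat /\ (b < k)%nat).
  { intros. unfold L. rewrite in_app_iff, !in_prod_iff, !in_seq. simpl.
    split.
    - intros [[[[[H|[]] Hi] Ha] Hb]|[[[[H|[]] Hi] Ha] Hb]]; subst; split; [left|idtac|right|idtac]; auto; lia.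
    - intros [[[-> Hi]|[-> Hi]] [Ha Hb]]; [left|right]; repeat split; auto; lia. }
  destruct (BWL L u) as [phi [lim [Hphi Hlim]]].
  { intros [[[t i] a] b] Hx. apply HL in Hx. destruct Hx as [[[-> Hi]|[-> Hi]] [Ha Hb]].
    - exists 1. intros n. simpl. apply HFn; auto.
    - destruct (cv_bounded (fun n => sumR p (fun i0 => Ms n i0 i)) (sumR p (fun i0 => M i0 i))) as [C HC].
      { apply (cv_sumR p (fun n i0 => Ms n i0 i)). intros; apply Hcv; auto. }
      exists C. intros n. simpl. eapply Rle_trans. apply HFn; auto.
      eapply Rle_trans; [apply Rle_abs|apply HC]. }
  set (LA := fun i a b => lim (true, i, a, b)).
  set (LB := fun j a b => lim (false, j, a, b)).
  assert (HA : forall i a b, (i < p)%nat -> (a < k)%nat -> (b < k)%nat ->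
     Un_cv (fun n => fst (F (phi n)) i a b) (LA i a b)).
  { intros. apply (Hlim (true, i, a, b)). apply HL; auto. }
  assert (HB : forall j a b, (j < q)%nat -> (a < k)%nat -> (b < k)%nat ->
     Un_cv (fun n => snd (F (phi n)) j a b) (LB j a b)).
  { intros. apply (Hlim (false, j, a, b)). apply HL; auto. }
  assert (Hpsd : forall (X : nat -> Mat) (LX : Mat),
     (forall n, is_psd k (X n)) ->
     (forall a b, (a < k)%nat -> (b < k)%nat -> Un_cv (fun n => X n a b) (LX a b)) ->
     is_psd k LX).
  { intros X LX HX HXc. split.
    - intros a b Ha Hb. apply (UL_sequence (fun n => X n a b)). apply HXc; auto.
      apply (cv_ext (fun n => X n b a)). intros n. destruct (HX n) as [Hs _]. apply Hs; auto.
      apply HXc; auto.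
    - intros x. apply (cv_nonneg (fun n => qf k (X n) x)).
      + unfold qf. apply (cv_sumR k (fun n a => sumR k (fun b => x a * X n a b * x b))).
        intros a Ha. apply (cv_sumR k (fun n b => x a * X n a b * x b)). intros b Hb.
        apply CV_mult; [apply CV_mult; [apply cv_const|apply HXc; auto]|apply cv_const].
      + intros n. apply HX. }
  assert (Hfact : has_psd_factorization p q k M).
  { exists LA, LB. split; [|split].
    - intros i Hi. apply (Hpsd (fun n => fst (F (phi n)) i)).
      + intros n. apply (HFn (phi n)). auto.
      + intros; apply HA; auto.
    - intros j Hj. apply (Hpsd (fun n => snd (F (phi n)) j)).
      + intros n. apply (HFn (phi n)). auto.
      + intros; apply HB; auto.
    - intros i j Hi Hj. apply (UL_sequence (fun n => Ms (phi n) i j)).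
      + apply (cv_sub (fun n => Ms n i j)); auto.
      + apply (cv_ext (fun n => tr_inner k (fst (F (phi n)) i) (snd (F (phi n)) j))).
        { intros n. symmetry. apply (HFn (phi n)); auto. }
        unfold tr_inner.
        apply (cv_sumR k (fun n a => sumR k (fun b => fst (F (phi n)) i a b * snd (F (phi n)) j b a))).
        intros a Ha. apply (cv_sumR k (fun n b => fst (F (phi n)) i a b * snd (F (phi n)) j b a)).
        intros b Hb. apply CV_mult; [apply HA|apply HB]; auto. }
  destruct (dec_inh_nat_subset_has_unique_least_element (fun r => has_psd_factorization p q r M))
    as [r [[Hr Hmin] _]].
  { intros n. apply classic. }
  { exists k; auto. }
  exists r. split. split; auto. apply Hmin; auto.
Qed.
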